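(* Let $\mathcal{A}$ be a separating union-closed family with base set $[n]$ and height $h\le 3$. Then $\mathrm{Avg}(\mathcal{A})=\frac{1}{|\mathcal{A}|}\sum_{A\in\mathcal{A}}|A| \geq \frac{n}{2}$.
   Context: A family of sets $\mathcal{A}$ is union-closed if it is a finite family of distinct finite sets with at least one nonempty member set, and $X,Y\in\mathcal{A}$ implies $X\cup Y\in\mathcal{A}$ (the empty set may be a member). The base set $\bigcup_{A\in\mathcal{A}}A$ is denoted $[n]=\{1,\dots,n\}$. $\mathcal{A}$ is separating if for any two distinct $x,y\in[n]$ there is $A\in\mathcal{A}$ containing exactly one of $x,y$. A chain in $\mathcal{A}$ is a subfamily any two distinct members of which are comparable under proper inclusion; the height $h$ of $\mathcal{A}$ is the maximum size of a chain in $\mathcal{A}$. *)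

(* Defs.v *)
From mathcomp Require Import all_boot all_order all_algebra.
Set Implicit Arguments. Unset Strict Implicit. Unset Printing Implicit Defensive.
Import Order.TTheory GRing.Theory Num.Theory.

Definition union_closed (n : nat) (F : {set {set 'I_n}}) : Prop :=
  (exists2 A, A \in F & A != set0) /\
  (forall X Y, X \in F -> Y \in F -> X :|: Y \in F).

Definition has_base_set (n : nat) (F : {set {set 'I_n}}) : Prop :=
  \bigcup_(A in F) A = [set: 'I_n].

Definition separating (n : nat) (F : {set {set 'I_n}}) : Prop :=
  forall x y : 'I_n, x != y ->
    exists2 A, A \in F & (x \in A) != (y \in A).

Definition is_chain (n : nat) (F C : {set {set 'I_n}}) : Prop :=
  C \subset F /\
  (forall X Y, X \in C -> Y \in C -> X != Y -> (X \proper Y) || (Y \proper X)).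

Definition height_le (n : nat) (F : {set {set 'I_n}}) (h : nat) : Prop :=
  forall C, is_chain F C -> #|C| <= h.

Local Open Scope ring_scope.
Definition avg_size (n : nat) (F : {set {set 'I_n}}) : rat :=
  (\sum_(A in F) (#|A|%:R : rat)) / (#|F|%:R).

(* Main.v *)
Require Import Defs.
From mathcomp Require Import all_boot all_order all_algebra.
Import GRing.Theory Num.Theory.

Lemma top_in n (F : {set {set 'I_n}}) :
  union_closed F -> has_base_set F -> setT \in F.
Proof.
case=> [[A0 A0F _] UC] HB; rewrite -HB.
have -> : \bigcup_(A in F) A = A0 :|: \bigcup_(A in F) A.
  by apply/esym/setUidPr; apply: (bigcup_sup A0 A0F).
elim/big_rec: _ => [|i B iF IH]; first by rewrite setU0.
by rewrite setUCA; apply: UC.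
Qed.

Lemma no_chain4 n (F : {set {set 'I_n}}) a b c d :
  height_le F 3 -> a \in F -> b \in F -> c \in F -> d \in F ->
  a \proper b -> b \proper c -> c \proper d -> False.
Proof.
move=> H aF bF cF dF ab bc cd.
have ac := proper_trans ab bc; have ad := proper_trans ac cd.
have bd := proper_trans bc cd.
have neq (X Y : {set 'I_n}) : X \proper Y -> X != Y.
  by move=> XY; apply/eqP => E; rewrite E properxx in XY.
have: #|a |: (b |: (c |: [set d]))| <= 3.
  apply: H; split.
    by apply/subsetP => X; rewrite !inE => /or4P [] /eqP ->.
  move=> X Y; rewrite !inE => /or4P [] /eqP -> /or4P [] /eqP ->;
    rewrite ?eqxx //= ?ab ?ac ?ad ?bc ?bd ?cd ?orbT //.
rewrite !cardsU1 cards1 !inE.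
by rewrite (negbTE (neq _ _ ab)) (negbTE (neq _ _ ac)) (negbTE (neq _ _ ad))
  (negbTE (neq _ _ bc)) (negbTE (neq _ _ bd)) (negbTE (neq _ _ cd)).
Qed.

Lemma key n (F : {set {set 'I_n}}) X X' z :
  union_closed F -> separating F -> height_le F 3 -> setT \in F ->
  X \in F -> X' \in F -> X != X' -> z \notin X -> z \notin X' ->
  X :|: X' = [set~ z].
Proof.
move=> [_ UC] sep H top XF X'F neq zX zX'.
have YF : X :|: X' \in F by apply: UC.
have zY : z \notin X :|: X' by rewrite inE negb_or zX zX'.
have [Z ZF ZY] : exists2 Z, Z \in F & Z \proper X :|: X'.
  case: (boolP (X \proper X :|: X')) => hX; first by exists X.
  exists X' => //; rewrite properEneq subsetUr andbT.
  move: hX; rewrite properE subsetUl /= negbK => sYX.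
  apply/eqP => E; move/eqP: neq; apply.
  have E2 : X = X :|: X' by apply/eqP; rewrite eqEsubset sYX subsetUl.
  by rewrite E2 -E.
apply/setP => w; rewrite in_setC1.
case: (eqVneq w z) => [->|wz]; first by rewrite (negbTE zY).
case: (boolP (w \in X :|: X')) => // wY; exfalso.
have [W WF hW] := sep w z wz.
have VF : X :|: X' :|: W \in F by apply: UC.
apply: (@no_chain4 _ _ _ _ _ _ H ZF YF VF top ZY).
  rewrite properE subsetUl /=; apply/subsetPn.
  case: (boolP (w \in W)) hW => wW hW.
    by exists w; rewrite // inE wW orbT.
  have zW : z \in W by move: hW; case: (z \in W).
  by exists z; rewrite // inE zW orbT.
rewrite properE subsetT /=; apply/subsetPn.
case: (boolP (w \in W)) hW => wW hW.
  have zW : z \notin W by move: hW; case: (z \in W).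
  by exists z; rewrite // inE negb_or zY zW.
by exists w; rewrite // inE negb_or wY.
Qed.

Definition fmap n (F : {set {set 'I_n}}) (p : {set 'I_n} * 'I_n) :
    {set 'I_n} * 'I_n :=
  let (X, x) := p in
  if ~: X == [set x] then (setT, x)
  else if [pick j | (j \notin X) && (j != x) && ([set~ j] \in F)] is Some j
  then ([set~ j], x)
  else if [set~ x] \notin F then (setT, x)
  else if [pick y | (y \notin X) && ([set~ y] \notin F)] is Some y
  then (setT, y)
  else (setT, x).
Arguments fmap {n}.

Lemma fmap_spec n (F : {set {set 'I_n}}) (X : {set 'I_n}) (x : 'I_n) : x \notin X ->
  [\/ ~: X = [set x] /\ fmap F (X, x) = (setT, x),
      exists j, [/\ j \notin X, j != x, [set~ j] \in F
                 & fmap F (X, x) = ([set~ j], x)] |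
      exists y, [/\ y \notin X, [set~ y] \notin F, fmap F (X, x) = (setT, y),
        forall j, j \notin X -> j != x -> [set~ j] \notin F &
        y = x \/ [set~ x] \in F]].
Proof.
move=> xX; rewrite /fmap.
case: ifP => [/eqP E | NE]; first by apply: Or31.
case: pickP => [j /andP[/andP[jX jx] jF] | Hj].
  by apply: Or32; exists j.
have Hj' : forall j, j \notin X -> j != x -> [set~ j] \notin F.
  by move=> j jX jx; have := Hj j; rewrite jX jx /= => ->.
case: ifP => [xF | /negbFE xF].
  by apply: Or33; exists x; split; auto.
case: pickP => [y /andP[yX yF] | Hy].
  by apply: Or33; exists y; split; auto.
exfalso.
case/boolP: (~: X \subset [set x]) => S.
  move/negP: NE; apply; rewrite eqEsubset S sub1set inE xX //.
move/subsetPn: S => [w wX wx].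
rewrite inE in wX; rewrite inE in wx.
have := Hj w; have := Hy w; rewrite wX wx /=.
by case: ([set~ w] \in F).
Qed.

Arguments fmap_spec {n} F {X x}.

Local Open Scope ring_scope.
Theorem theorem1p4 (n : nat) (F : {set {set 'I_n}}) :
  union_closed F -> has_base_set F -> separating F -> height_le F 3 ->
  (n%:R / 2 : rat) <= avg_size F.
Proof.
move=> UC HB sep H.
have top := @top_in _ _ UC HB.
have UC' := UC; case: UC' => [[A0 A0F _] UCu].
have K (X X' : {set 'I_n}) (z : 'I_n) := @key _ F X X' z UC sep H top.
pose P := [set p : {set 'I_n} * 'I_n | (p.1 \in F) && (p.2 \notin p.1)].
pose Q := [set p : {set 'I_n} * 'I_n | (p.1 \in F) && (p.2 \in p.1)].
have setCnT (j : 'I_n) : [set~ j] != setT.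
  by apply/eqP => E; have := in_setT j; rewrite -E in_setC1 eqxx.
have inj : {in P &, injective (fmap F)}.
  move=> [X x] [X' x']; rewrite !inE => /andP[XF xX] /andP[X'F x'X].
  rewrite /= in XF xX X'F x'X => E.
  have CX (Z : {set 'I_n}) (z : 'I_n) : ~: Z = [set z] -> Z = [set~ z].
    by move=> EZ; rewrite -EZ setCK.
  case: (fmap_spec F xX) => [[cX fX] | [j [jX jx jF fX]] | [y [yX yF fX nK yx]]];
  case: (fmap_spec F x'X) => [[cX' fX'] | [j' [jX' jx' jF' fX']] | [y' [yX' yF' fX' nK' yx']]];
  rewrite fX fX' in E; case: E => //.
  - by move=> Ex; subst x'; rewrite (setC_inj (etrans cX (esym cX'))).
  - by move=> E; have := setCnT j'; rewrite -E eqxx.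
  - by move=> E; move: yF'; rewrite -E -(CX _ _ cX) XF.
  - by move=> E; have := setCnT j; rewrite E eqxx.
  - move=> /setC_inj /set1_inj Ej Ex; subst j' x'.
    case: (eqVneq X X') => [-> // | nXX].
    have := K _ _ _ XF X'F nXX xX x'X; rewrite (K _ _ _ XF X'F nXX jX jX').
    by move/setC_inj/set1_inj => E; rewrite E eqxx in jx.
  - by move=> E; have := setCnT j; rewrite E eqxx.
  - by move=> E; move: yF; rewrite E -(CX _ _ cX') X'F.
  - by move=> E; have := setCnT j'; rewrite -E eqxx.
  - move=> Ey; subst y'.
    case: (eqVneq X X') => [EX | nXX]; last first.
      by move: yF; rewrite -(K _ _ _ XF X'F nXX yX yX') UCu.
    subst X'; case: (eqVneq x x') => [-> // | nxx].
    have nxx' : x' != x by rewrite eq_sym.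
    have h1 : y = x by case: yx => // xF; move: (nK' _ xX nxx); rewrite xF.
    have h2 : y = x' by case: yx' => // xF; move: (nK _ x'X nxx'); rewrite xF.
    by rewrite -h1 -h2 eqxx in nxx.
have sub : fmap F @: P \subset Q.
  apply/subsetP => q /imsetP [[X x]]; rewrite !inE => /andP[XF xX].
  rewrite /= in XF xX => ->.
  case: (fmap_spec F xX) => [[_ ->] | [j [_ jx jF ->]] | [y [_ _ -> _ _]]];
    by rewrite !inE /= ?top ?jF // eq_sym.
have le : (#|P| <= #|Q|)%N.
  by rewrite -(card_in_imset inj); apply: subset_leq_card.
have cnt (b : bool) : #|[set p : {set 'I_n} * 'I_n | (p.1 \in F) && ((p.2 \in p.1) == b)]|
    = (\sum_(X in F) #|[set x | (x \in X) == b]|)%N.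
  rewrite -sum1_card.
  rewrite [RHS](eq_bigr (fun X : {set 'I_n} => \sum_(x : 'I_n | (x \in X) == b) 1)%N); last first.
    by move=> X _; rewrite -sum1_card; apply: eq_bigl => x; rewrite inE.
  rewrite pair_big_dep; apply: eq_bigl => p; rewrite inE.
  done.
have cP : #|P| = (\sum_(X in F) #|~: X|)%N.
  have -> : P = [set p : {set 'I_n} * 'I_n | (p.1 \in F) && ((p.2 \in p.1) == false)].
    by apply/setP => p; rewrite !inE eqbF_neg.
  rewrite cnt; apply: eq_bigr => X _; apply: eq_card => x; rewrite !inE eqbF_neg.
  done.
have cQ : #|Q| = (\sum_(X in F) #|X|)%N.
  have -> : Q = [set p : {set 'I_n} * 'I_n | (p.1 \in F) && ((p.2 \in p.1) == true)].
    by apply/setP => p; rewrite !inE eqb_id.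
  rewrite cnt; apply: eq_bigr => X _; apply: eq_card => x; rewrite !inE eqb_id.
  done.
have tot : (#|P| + #|Q| = #|F| * n)%N.
  rewrite cP cQ -big_split /= -sum_nat_const; apply: eq_bigr => X _.
  by rewrite addnC cardsC card_ord.
have fpos : (0 < #|F|)%N by apply/card_gt0P; exists A0.
have nat_ineq : (n * #|F| <= (\sum_(X in F) #|X|) * 2)%N.
  by rewrite -cQ muln2 -addnn mulnC -tot leq_add2r.
rewrite /avg_size -natr_sum ler_pdivlMr ?ltr0n // mulrAC ler_pdivrMr //.
by rewrite -!natrM ler_nat.
Qed.
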